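(* Let $\Pi\in\boldsymbol{\Pi}_{q,r}$ and $W\in\mathbb{R}^{q\times p}$, and define $\Pi_W:=\begin{bmatrix}W^\top\Pi_{11}W&W^\top\Pi_{12}\\ \Pi_{21}W&\Pi_{22}\end{bmatrix}\in\mathbb{S}^{p+r}$. Then $\mathcal{Z}_r(\Pi)W\subseteq\mathcal{Z}_r(\Pi_W)$. If, in addition, $W$ has full column rank or $\Pi_{22}$ is nonsingular, then $\mathcal{Z}_r(\Pi)W=\mathcal{Z}_r(\Pi_W)$.
   Context: $\mathbb{S}^k$ denotes the real symmetric $k\times k$ matrices; for symmetric matrices, $A\ge 0$ means positive semidefinite. $A^\dagger$ is the Moore–Penrose pseudo-inverse. Any $\Pi\in\mathbb{S}^{q+r}$ is partitioned as $\Pi=\begin{bmatrix}\Pi_{11}&\Pi_{12}\\ \Pi_{21}&\Pi_{22}\end{bmatrix}$ with $\Pi_{11}\in\mathbb{S}^q$, $\Pi_{22}\in\mathbb{S}^r$. The generalized Schur complement is $\Pi\mid\Pi_{22}:=\Pi_{11}-\Pi_{12}\Pi_{22}^\dagger\Pi_{21}$. The set $\boldsymbol{\Pi}_{q,r}$ consists of all $\Pi\in\mathbb{S}^{q+r}$ with $\Pi_{22}\le 0$, $\Pi\mid\Pi_{22}\ge 0$ and $\ker\Pi_{22}\subseteq\ker\Pi_{12}$. Define $\mathcal{Z}_r(\Pi)=\{Z\in\mathbb{R}^{r\times q}:\begin{bmatrix}I_q\\ Z\end{bmatrix}^\top\Pi\begin{bmatrix}I_q\\ Z\end{bmatrix}\ge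 0\}$ (and analogously $\mathcal{Z}_r(\Pi_W)\subseteq\mathbb{R}^{r\times p}$ with $I_p$). For a set $\mathcal{S}\subseteq\mathbb{R}^{r\times q}$, $\mathcal{S}W:=\{SW:S\in\mathcal{S}\}$. *)

(* Defs.v *)
From Stdlib Require Import ClassicalEpsilon.
From mathcomp Require Import all_boot all_order all_algebra.
Set Implicit Arguments. Unset Strict Implicit. Unset Printing Implicit Defensive.
Import Order.TTheory GRing.Theory Num.Theory.
Local Open Scope ring_scope.

Definition symmetric (R : ringType) (n : nat) (A : 'M[R]_n) : Prop := A^T = A.

Definition psd (R : realFieldType) (n : nat) (A : 'M[R]_n) : Prop :=
  A^T = A /\ forall x : 'cV[R]_n, 0 <= (x^T *m A *m x) 0 0.

Definition is_pinv (R : realFieldType) (m n : nat) (A : 'M[R]_(m, n))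
  (X : 'M[R]_(n, m)) : Prop :=
  [/\ A *m X *m A = A, X *m A *m X = X, (A *m X)^T = A *m X & (X *m A)^T = X *m A].

(* Moore-Penrose pseudo-inverse (exists and is unique for real matrices) *)
Definition pinv (R : realFieldType) (m n : nat) (A : 'M[R]_(m, n)) : 'M[R]_(n, m) :=
  epsilon (inhabits 0) (fun X => is_pinv A X).

Definition schur (R : realFieldType) (q r : nat) (Pi : 'M[R]_(q + r)) : 'M[R]_q :=
  ulsubmx Pi - ursubmx Pi *m pinv (drsubmx Pi) *m dlsubmx Pi.

Definition PiSet (R : realFieldType) (q r : nat) (Pi : 'M[R]_(q + r)) : Prop :=
  [/\ symmetric Pi,
      psd (- drsubmx Pi),
      psd (schur Pi)
    & forall v : 'cV[R]_r, drsubmx Pi *m v = 0 -> ursubmx Pi *m v = 0].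

Definition inZ (R : realFieldType) (q r : nat) (Pi : 'M[R]_(q + r))
  (Z : 'M[R]_(r, q)) : Prop :=
  psd ((col_mx 1%:M Z)^T *m Pi *m col_mx 1%:M Z).

Definition PiW (R : realFieldType) (q r p : nat) (Pi : 'M[R]_(q + r))
  (W : 'M[R]_(q, p)) : 'M[R]_(p + r) :=
  block_mx (W^T *m ulsubmx Pi *m W) (W^T *m ursubmx Pi)
           (dlsubmx Pi *m W) (drsubmx Pi).

(* Main.v *)
Require Import Defs.
From Stdlib Require Import ClassicalEpsilon.
From mathcomp Require Import all_boot all_order all_algebra.
From mathcomp Require Import ring lra.
Set Implicit Arguments. Unset Strict Implicit. Unset Printing Implicit Defensive.
Import Order.TTheory GRing.Theory Num.Theory.
Local Open Scope ring_scope.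

Section Aux.
Variable R : realFieldType.

Lemma mulmxtr_diag m n (M : 'M[R]_(m, n)) i :
  (M *m M^T) i i = \sum_j M i j ^+ 2.
Proof. rewrite !mxE; apply: eq_bigr => j _; by rewrite mxE expr2. Qed.

Lemma mulmxtr_eq0 m n (M : 'M[R]_(m, n)) : M *m M^T = 0 -> M = 0.
Proof.
move=> H; apply/matrixP => i j; rewrite mxE.
have := mulmxtr_diag M i; rewrite H mxE => /esym /eqP.
rewrite psumr_eq0 => [/allP /(_ j) |j' _]; last by rewrite sqr_ge0.
rewrite mem_index_enum /= => /(_ isT). rewrite sqrf_eq0 => /eqP. done.
Qed.

Lemma cols_eq0 m n (M : 'M[R]_(m, n)) : (forall j, col j M = 0) -> M = 0.
Proof.
move=> H; apply/matrixP => i j; have := congr1 (fun A : 'cV[R]_m => A i 0) (H j).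
by rewrite !mxE.
Qed.

Lemma ker_lift m1 m2 n (F : 'M[R]_(m1, n)) (G : 'M[R]_(m2, n)) :
  (forall v : 'cV_n, F *m v = 0 -> G *m v = 0) ->
  forall k (V : 'M_(n, k)), F *m V = 0 -> G *m V = 0.
Proof.
move=> H k V FV; apply: cols_eq0 => j; rewrite colE -mulmxA -colE; apply: H.
by rewrite colE mulmxA FV mul0mx.
Qed.

Lemma free_of m n (M : 'M[R]_(m, n)) :
  (forall k (U : 'M_(k, m)), U *m M = 0 -> U = 0) -> row_free M.
Proof. move=> H; rewrite -kermx_eq0; apply/eqP/H; exact: mulmx_ker. Qed.

Lemma gram_unit m k (B : 'M[R]_(m, k)) : row_free B^T -> (B^T *m B) \in unitmx.
Proof.
move=> fB; rewrite -row_free_unit; apply: free_of => j U H.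
have : (U *m B^T) *m (U *m B^T)^T = 0.
  by rewrite trmx_mul trmxK mulmxA -(mulmxA U) H mul0mx.
move/mulmxtr_eq0/eqP; rewrite mulmx_free_eq0 //; by move/eqP.
Qed.

Lemma pinv_fact m n k (B : 'M[R]_(m, k)) (C : 'M[R]_(k, n)) :
  (B^T *m B) \in unitmx -> (C *m C^T) \in unitmx ->
  is_pinv (B *m C) (C^T *m invmx (C *m C^T) *m invmx (B^T *m B) *m B^T).
Proof.
move=> uB uC.
have e1 : forall j (U : 'M_(k, j)), invmx (B^T *m B) *m (B^T *m (B *m U)) = U.
  by move=> j U; rewrite mulmxA mulKmx.
have e2 : forall j (U : 'M_(j, k)), (U *m C) *m C^T *m invmx (C *m C^T) = U.
  by move=> j U; rewrite -(mulmxA U C C^T) mulmxK.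
have e3 : forall j (V : 'M_(k, j)), invmx (C *m C^T) *m (C *m (C^T *m V)) = V.
  by move=> j V; rewrite mulmxA mulKmx.
have e4 : forall j (V : 'M_(k, j)), C *m (C^T *m (invmx (C *m C^T) *m V)) = V.
  by move=> j V; rewrite mulmxA mulKVmx.
have sB : (invmx (B^T *m B))^T = invmx (B^T *m B) by rewrite trmx_inv trmx_mul trmxK.
have sC : (invmx (C *m C^T))^T = invmx (C *m C^T) by rewrite trmx_inv trmx_mul trmxK.
split.
- rewrite -!mulmxA e1 !mulmxA e2 //.
- by rewrite -!mulmxA e1 e3.
- by rewrite -!mulmxA e4 !trmx_mul sB trmxK mulmxA.
- by rewrite -!mulmxA e1 !trmx_mul sC trmxK mulmxA.
Qed.

Lemma pinv_exists m n (A : 'M[R]_(m, n)) : exists X, is_pinv A X.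
Proof.
have hB : row_free (col_base A)^T by rewrite /row_free mxrank_tr; exact: col_base_full.
have hC : row_free ((row_base A)^T)^T by rewrite trmxK; exact: row_base_free.
have uB := gram_unit hB; have uC := gram_unit hC; rewrite trmxK in uC.
have := pinv_fact uB uC; rewrite mulmx_base => H; by eexists; exact: H.
Qed.

Lemma pinvP m n (A : 'M[R]_(m, n)) : is_pinv A (pinv A).
Proof.
rewrite /pinv; apply: epsilon_spec; exact: pinv_exists.
Qed.

Lemma trD m n (A B : 'M[R]_(m, n)) : (A + B)^T = A^T + B^T.
Proof. by apply/matrixP => i j; rewrite !mxE. Qed.
Lemma trN m n (A : 'M[R]_(m, n)) : (- A)^T = - A^T.
Proof. by apply/matrixP => i j; rewrite !mxE. Qed.
Lemma trB m n (A B : 'M[R]_(m, n)) : (A - B)^T = A^T - B^T.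
Proof. by rewrite trD trN. Qed.
Lemma trZ m n (a : R) (A : 'M[R]_(m, n)) : (a *: A)^T = a *: A^T.
Proof. by apply/matrixP => i j; rewrite !mxE. Qed.

Lemma scal1 (M : 'M[R]_1) : M 0 0 = 0 -> M = 0.
Proof. by move=> H; apply/matrixP => i j; rewrite !ord1 mxE. Qed.

Lemma tr11 (M : 'M[R]_1) : M^T 0 0 = M 0 0.
Proof. by rewrite mxE. Qed.

Lemma eD m n (A B : 'M[R]_(m, n)) i j : (A + B) i j = A i j + B i j.
Proof. by rewrite mxE. Qed.
Lemma eN m n (A : 'M[R]_(m, n)) i j : (- A) i j = - A i j.
Proof. by rewrite mxE. Qed.
Lemma eB m n (A B : 'M[R]_(m, n)) i j : (A - B) i j = A i j - B i j.
Proof. by rewrite !mxE. Qed.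
Lemma eZ m n a (A : 'M[R]_(m, n)) i j : (a *: A) i j = a * A i j.
Proof. by rewrite mxE. Qed.

Lemma qf_expand n (N : 'M[R]_n) (v w : 'cV_n) (t : R) :
  ((v + t *: w)^T *m N *m (v + t *: w)) 0 0 =
   (v^T *m N *m v) 0 0 + t * (v^T *m N *m w) 0 0 + t * (w^T *m N *m v) 0 0
   + t ^+ 2 * (w^T *m N *m w) 0 0.
Proof.
rewrite trD trZ !mulmxDl -!scalemxAl !mulmxDr -!scalemxAr.
rewrite !eD !eZ (eD (w^T *m N *m v)) eZ expr2; ring.
Qed.

Lemma qf_sub n (S : 'M[R]_n) (a b : 'cV_n) :
  ((a - b)^T *m S *m (a - b)) 0 0 =
  (a^T *m S *m a) 0 0 - (a^T *m S *m b) 0 0 - (b^T *m S *m a) 0 0 + (b^T *m S *m b) 0 0.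
Proof.
rewrite trB !mulmxBl !mulmxBr !eB; lra.
Qed.

Lemma qf_add n (M1 M2 : 'M[R]_n) (x : 'cV_n) :
  (x^T *m (M1 + M2) *m x) 0 0 = (x^T *m M1 *m x) 0 0 + (x^T *m M2 *m x) 0 0.
Proof. by rewrite mulmxDr mulmxDl eD. Qed.

Lemma psd_ker n (N : 'M[R]_n) (v : 'cV_n) :
  psd N -> (v^T *m N *m v) 0 0 <= 0 -> N *m v = 0.
Proof.
move=> [sN pN] hv.
have a0 : (v^T *m N *m v) 0 0 = 0 by apply/eqP; rewrite eq_le hv pN.
have c12 : (v^T *m N *m (N *m v)) 0 0 = ((N *m v)^T *m N *m v) 0 0.
  by rewrite -tr11 !trmx_mul trmxK sN !mulmxA.
have cw : ((N *m v)^T *m N *m v) 0 0 = ((N *m v)^T *m (N *m v)) 0 0.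
  by rewrite mulmxA.
set c := ((N *m v)^T *m N *m v) 0 0.
set b := ((N *m v)^T *m N *m (N *m v)) 0 0.
have hb : 0 <= b by apply: pN.
have key : forall t, 0 <= 2 * t * c + t ^+ 2 * b.
  move=> t; have := pN (v + t *: (N *m v)); rewrite qf_expand a0 c12 -/c -/b.
  move=> H; nra.
have hc : c = 0.
  have := key (- c / (b + 1)); set t := - c / (b + 1) => H.
  have hb1 : 0 < b + 1 by lra.
  have H2 : 0 <= (b + 1) ^+ 2 * (2 * t * c + t ^+ 2 * b) by apply: mulr_ge0; [exact: sqr_ge0 | exact: H].
  have : (b + 1) ^+ 2 * (2 * t * c + t ^+ 2 * b) = - (c ^+ 2 * (b + 2)).
    have -> : t = - c / (b + 1) by [].
    by field; rewrite gt_eqF.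
  move=> E; rewrite E in H2; nra.
suff : (N *m v)^T = 0 by move/(congr1 trmx); rewrite trmxK => ->; apply/matrixP=> i j; rewrite !mxE.
apply: mulmxtr_eq0; apply: scal1; by rewrite trmxK -cw.
Qed.

Lemma LZ m n (P11 : 'M[R]_m) (B12 : 'M_(m, n)) (B21 : 'M_(n, m)) (A : 'M_n)
  (Z : 'M_(n, m)) :
  (col_mx 1%:M Z)^T *m block_mx P11 B12 B21 A *m col_mx 1%:M Z =
  P11 + Z^T *m B21 + (B12 *m Z + Z^T *m A *m Z).
Proof.
rewrite tr_col_mx trmx1 mul_row_block mul_row_col !mul1mx mulmx1 mulmxDl.
by [].
Qed.

Lemma psd_congr m n (M : 'M[R]_m) (W : 'M_(m, n)) : psd M -> psd (W^T *m M *m W).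
Proof.
move=> [sM pM]; split; first by rewrite !trmx_mul trmxK sM mulmxA.
move=> x; have := pM (W *m x); by rewrite trmx_mul !mulmxA.
Qed.

Lemma zmod_id (V : zmodType) (a b c d e : V) :
  a + c + (b + d) = (a - e) + (d + c + (b + e)).
Proof.
rewrite [d + c + _]addrA.
rewrite [RHS]addrC -[RHS]addrA [e + _]addrC addrNK.
by rewrite [d + c]addrC -[c + d + b]addrA [d + b]addrC [RHS]addrC addrA.
Qed.

Lemma complete q r p (ul : 'M[R]_q) (ur : 'M_(q,r)) (dl : 'M_(r,q)) (A : 'M_r)
  (X : 'M_r) (K : 'M_(r,q)) (W : 'M_(q,p)) (Y : 'M_(r,p)) :
  dl = A *m K -> ur = K^T *m A -> K^T = ur *m X ->
  W^T *m ul *m W + Y^T *m (dl *m W) + (W^T *m ur *m Y + Y^T *m A *m Y) =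
  W^T *m (ul - ur *m X *m dl) *m W + (Y + K *m W)^T *m A *m (Y + K *m W).
Proof.
move=> hAK hKA hKt.
have f1 : forall j (V : 'M_(q, j)), A *m (K *m V) = dl *m V.
  by move=> j V; rewrite mulmxA hAK.
have f2 : forall j (V : 'M_(r, j)), K^T *m (A *m V) = ur *m V.
  by move=> j V; rewrite mulmxA hKA.
have f4 : forall j (V : 'M_(r, j)), K^T *m V = ur *m (X *m V).
  by move=> j V; rewrite hKt mulmxA.
rewrite mulmxBr mulmxBl trD trmx_mul !mulmxDl !mulmxDr -!mulmxA !f1 !f2 f4.
exact: zmod_id.
Qed.
End Aux.
Theorem mainTheorem3 (R : realFieldType) (q r p : nat)
  (Pi : 'M[R]_(q + r)) (W : 'M[R]_(q, p)) :
  PiSet Pi ->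
  (forall Z : 'M[R]_(r, q), inZ Pi Z -> inZ (PiW Pi W) (Z *m W)) /\
  ((\rank W = p \/ drsubmx Pi \in unitmx) ->
   forall Y : 'M[R]_(r, p),
     inZ (PiW Pi W) Y <-> exists Z : 'M[R]_(r, q), inZ Pi Z /\ Y = Z *m W).
Proof.
move=> [hsym hN hS hker].
have eqZ : forall Z : 'M[R]_(r, q), (col_mx 1%:M Z)^T *m Pi *m col_mx 1%:M Z =
   ulsubmx Pi + Z^T *m dlsubmx Pi + (ursubmx Pi *m Z + Z^T *m drsubmx Pi *m Z).
  by move=> Z; rewrite -{1}(submxK Pi) LZ.
have eqW : forall Y : 'M[R]_(r, p), (col_mx 1%:M Y)^T *m PiW Pi W *m col_mx 1%:M Y =
   W^T *m ulsubmx Pi *m W + Y^T *m (dlsubmx Pi *m W) +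
   (W^T *m ursubmx Pi *m Y + Y^T *m drsubmx Pi *m Y).
  by move=> Y; rewrite /PiW LZ.
have part1 : forall Z : 'M[R]_(r, q), inZ Pi Z -> inZ (PiW Pi W) (Z *m W).
  move=> Z; rewrite /inZ eqZ eqW => /(psd_congr W).
  by rewrite !mulmxDr !mulmxDl trmx_mul !mulmxA.
split => // hcase Y; split; last by move=> [Z [hZ ->]]; exact: part1.
rewrite /inZ eqW.
move: hker hS hN; rewrite /schur.
set ul := ulsubmx Pi; set ur := ursubmx Pi; set dl := dlsubmx Pi; set A := drsubmx Pi.
move=> hker hS hN.
have sA : A^T = A by rewrite /A trmx_drsub hsym.
have sul : ul^T = ul by rewrite /ul trmx_ulsub hsym.
have sur : ur^T = dl by rewrite /ur trmx_ursub hsym.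
have sdl : dl^T = ur by rewrite /dl trmx_dlsub hsym.
have [X1 X2 X3 X4] := pinvP A.
set X := pinv A in hS X1 X2 X3 X4 *.
set K := X^T *m dl.
have hker' := ker_lift hker.
have h1 : ur *m (1%:M - X *m A) = 0.
  apply: hker'; by rewrite mulmxBr mulmx1 mulmxA X1 subrr.
have hurX : ur = ur *m X *m A.
  by apply/eqP; rewrite -subr_eq0 -mulmxA -{1}(mulmx1 ur) -mulmxBr h1.
have hKt : K^T = ur *m X by rewrite /K trmx_mul trmxK sdl.
have hKA : ur = K^T *m A by rewrite hKt.
have hAK : dl = A *m K.
  by rewrite -sur {1}hKA trmx_mul sA trmxK.
rewrite (complete ul W Y hAK hKA hKt).
set S := ul - ur *m X *m dl in hS *.
set E := Y + K *m W.
set Q := W^T *m S *m W.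
move=> hY.
have [sS pS] := hS.
have [_ pY] := hY.
have sQ : Q^T = Q by rewrite /Q !trmx_mul trmxK sS mulmxA.
have ha : forall v : 'cV_p, Q *m v = 0 -> (A *m E) *m v = 0.
  move=> v Qv; rewrite -mulmxA.
  suff : - A *m (E *m v) = 0 by rewrite mulNmx => /eqP; rewrite oppr_eq0 => /eqP.
  apply: psd_ker => //.
  have := pY v; rewrite mulmxDr mulmxDl -(mulmxA v^T Q) Qv mulmx0 add0r.
  rewrite trmx_mul => H; rewrite mulmxN mulNmx eN !mulmxA oppr_le0.
  by rewrite !mulmxA in H.
have haM := ker_lift ha.
have hb : forall k (V : 'M_(p, k)), W *m V = 0 -> E *m V = 0.
  move=> k V WV; case: hcase => [rk | uA].
    have fW : row_free W^T by rewrite /row_free mxrank_tr rk.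
    have : V^T *m W^T == 0 by rewrite -trmx_mul WV; apply/eqP/matrixP=> i j; rewrite !mxE.
    rewrite mulmx_free_eq0 // => /eqP V0.
    have -> : V = 0 by rewrite -(trmxK V) V0; apply/matrixP=> i j; rewrite !mxE.
    by rewrite mulmx0.
  have : A *m E *m V = 0 by apply: haM; rewrite /Q -mulmxA WV mulmx0.
  by rewrite -mulmxA => /(congr1 (mulmx (invmx A))); rewrite mulKmx // mulmx0.
have [T1 _ _ _] := pinvP Q.
set T := pinv Q in T1.
have hd : forall v : 'cV_p, Q *m v = 0 -> (S *m W) *m v = 0.
  move=> v Qv; rewrite -mulmxA; apply: psd_ker => //.
  have -> : (W *m v)^T *m S *m (W *m v) = v^T *m (Q *m v) by rewrite trmx_mul /Q !mulmxA.
  by rewrite Qv mulmx0 mxE.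
have hdM := ker_lift hd.
have hSW : S *m W = S *m W *m T *m Q.
  have : S *m W *m (1%:M - T *m Q) = 0.
    by apply: hdM; rewrite mulmxBr mulmx1 mulmxA T1 subrr.
  rewrite mulmxBr mulmx1 => /eqP; rewrite subr_eq0 => /eqP.
  by rewrite !mulmxA.
have he : W^T *m S = Q *m T^T *m (W^T *m S).
  have := congr1 trmx hSW; rewrite !trmx_mul sS trmxK => H.
  by rewrite {1}H /Q !mulmxA.
have hQTQ : Q *m T^T *m Q = Q.
  by rewrite -{1}sQ -{2}sQ -!trmx_mul mulmxA T1 sQ.
set E2 := E *m (1%:M - T^T *m Q).
have hQ2 : Q *m (1%:M - T^T *m Q) = 0 by rewrite mulmxBr mulmx1 mulmxA hQTQ subrr.
have hAE2 : A *m E2 = 0 by rewrite /E2 mulmxA; apply: haM.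
have hsub : (E2 <= W)%MS.
  rewrite submxE /E2 -mulmxA mulmxBl mul1mx -!mulmxA.
  have WC := mulmx_coker W.
  have QC : Q *m cokermx W = 0 by rewrite /Q -mulmxA WC mulmx0.
  by rewrite WC !mulmx0 subr0 (hb _ _ WC).
set G2 := E2 *m pinvmx W.
have hG2W : G2 *m W = E2 by rewrite /G2 mulmxKpV.
have hAG2 : A *m G2 = 0 by rewrite /G2 mulmxA hAE2 mul0mx.
set F := T^T *m (W^T *m S).
set D := E *m F + G2.
exists (D - K); split; last first.
  rewrite mulmxBl mulmxDl hG2W /F /E2 (mulmxBr E) mulmx1.
  have -> : E *m (T^T *m (W^T *m S)) *m W = E *m (T^T *m Q) by rewrite /Q !mulmxA.
  by rewrite [_ + (E - _)]addrC subrK /E addrK.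
have hc := complete ul 1%:M (D - K) hAK hKA hKt.
rewrite trmx1 !mul1mx !mulmx1 subrK in hc.
rewrite eqZ.
change (psd (ul + (D - K)^T *m dl + (ur *m (D - K) + (D - K)^T *m A *m (D - K)))).
rewrite hc.
split; first by rewrite trD !trmx_mul trmxK sS sA mulmxA.
move=> x.
set u := F *m x.
have hDx : D *m x = E *m u + G2 *m x by rewrite /D mulmxDl -mulmxA.
have hGA : G2^T *m A = 0.
  by rewrite -sA -trmx_mul hAG2; apply/matrixP => i j; rewrite !mxE.
have q1 : (x^T *m (D^T *m A *m D) *m x) 0 0 = ((E *m u)^T *m A *m (E *m u)) 0 0.
  have -> : x^T *m (D^T *m A *m D) *m x = (D *m x)^T *m A *m (D *m x).
    by rewrite trmx_mul !mulmxA.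
  rewrite hDx -mulmxA (mulmxDr A) (mulmxA A G2) hAG2 mul0mx addr0 trD mulmxDl.
  rewrite (trmx_mul G2) -(mulmxA x^T) (mulmxA G2^T) hGA mul0mx mulmx0 addr0.
  by rewrite mulmxA.
have hWS : W^T *m S *m x = Q *m u by rewrite {1}he /u /F !mulmxA.
clearbody u.
have q3 : ((W *m u)^T *m S *m x) 0 0 = (u^T *m Q *m u) 0 0.
  have -> : (W *m u)^T *m S *m x = u^T *m (W^T *m S *m x) by rewrite trmx_mul !mulmxA.
  by rewrite hWS mulmxA.
have q2 : (x^T *m S *m (W *m u)) 0 0 = (u^T *m Q *m u) 0 0.
  rewrite -tr11; have -> : (x^T *m S *m (W *m u))^T = (W *m u)^T *m S *m x.
    by rewrite !trmx_mul trmxK sS !mulmxA.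
  exact: q3.
have q4 : ((W *m u)^T *m S *m (W *m u)) 0 0 = (u^T *m Q *m u) 0 0.
  by rewrite trmx_mul /Q !mulmxA.
have hx := pS (x - W *m u).
have hu := pY u.
rewrite qf_sub q2 q3 q4 in hx.
rewrite qf_add in hu.
have hu2 : (u^T *m (E^T *m A *m E) *m u) 0 0 = ((E *m u)^T *m A *m (E *m u)) 0 0.
  by rewrite trmx_mul !mulmxA.
rewrite hu2 in hu.
rewrite qf_add q1.
lra.
Qed.
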